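(* Let $0<\alpha<\frac12$, let $k\ge1$ be an integer, and let $z_1,\ldots,z_k$ be independent random variables each uniformly distributed on $[\alpha-\frac12,\frac12-\alpha]$, with mean $\bar z=\frac1k\sum_{i=1}^k z_i$. Then for any $\beta>0$, \[\mathbb{E}\Bigl(\exp\Bigl(-\beta\sum_{i=1}^k (z_i-\bar z)^2\Bigr)\Bigr)\le k^{1/2}\Bigl(\frac{\pi}{(1-2\alpha)^2\beta}\Bigr)^{(k-1)/2}.\] *)

(* Defs.v *)
From HB Require Import structures.
From mathcomp Require Import all_boot all_order all_algebra.
From mathcomp Require Import all_classical all_reals all_analysis.
Set Implicit Arguments. Unset Strict Implicit. Unset Printing Implicit Defensive.
Import Order.TTheory GRing.Theory Num.Theory.
Local Open Scope classical_set_scope.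
Local Open Scope ring_scope.

(* Mutual independence of a finite family (z i)_{i < k} of real random
   variables: for every family of Borel sets B_i,
   P (/\_i {z_i in B_i}) = prod_i P {z_i in B_i}.
   (Taking B_j = setT for omitted indices, this is the product rule over
   every subfamily.) *)
Definition mutually_independent d (T : measurableType d) (R : realType)
    (P : probability T R) (k : nat) (z : 'I_k -> {RV P >-> R}) : Prop :=
  forall B : 'I_k -> set R, (forall i, measurable (B i)) ->
    P (\bigcap_(i in [set: 'I_k]) (z i @^-1` B i)) =
    (\prod_(i < k) P (z i @^-1` B i))%E.

Definition uniformly_distributed d (T : measurableType d) (R : realType)
    (P : probability T R) (a b : R) (X : {RV P >-> R}) : Prop :=
  forall A : set R, measurable A ->
    distribution P X A =
    (\int[@lebesgue_measure R]_(x in A) (uniform_pdf a b x)%:E)%E.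

Definition zmean d (T : measurableType d) (R : realType)
    (P : probability T R) (k : nat) (z : 'I_k -> {RV P >-> R}) (w : T) : R :=
  k%:R^-1 * \sum_(i < k) z i w.

(* Main.v *)
Require Import Defs.
From HB Require Import structures.
From mathcomp Require Import all_boot all_order all_algebra.
From mathcomp Require Import all_classical all_reals all_analysis.
From mathcomp Require Import measurable_realfun.
From mathcomp Require Import ring lra.
Import Order.TTheory GRing.Theory Num.Theory.
Local Open Scope classical_set_scope.
Local Open Scope ring_scope.
Import HBNNSimple.
Section key.
Context d (T : measurableType d) (R : realType) (P : probability T R).
Local Open Scope ereal_scope.

Lemma expand_nnsfun (G : T -> R) (X : {mfun T >-> R}) (h : {nnsfun R >-> R}) :
  measurable_fun setT G -> (forall w, (0 <= G w)%R) ->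
  \int[P]_w ((G w)%:E * (h (X w))%:E) =
  \sum_(r \in range h) r%:E * \int[P]_w ((G w)%:E * (\1_(h @^-1` [set r]) (X w))%:E).
Proof.
move=> mG G0.
have h0 r : r \in range h -> (0 <= r)%R.
  by rewrite inE => -[x _ <-]; exact: fun_ge0.
transitivity (\int[P]_w (\sum_(r \in range h) (G w)%:E * (r%:E * (\1_(h @^-1` [set r]) (X w))%:E))).
  apply: eq_integral => w _.
  rewrite (fimfunE h (X w)) -fsumEFin// ge0_mule_fsumr; last first.
    by move=> r; rewrite EFinM nnfun_muleindic_ge0.
  by apply: eq_fsbigr => r rh; rewrite EFinM.
rewrite ge0_integral_fsum//; last 2 first.
  - move=> r; apply/measurable_EFinP; apply: measurable_funM => //.
    apply: measurable_funM => //; apply: measurableT_comp => //.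
  - move=> r w _; apply: mule_ge0; first by rewrite lee_fin.
    exact: nnfun_muleindic_ge0.
apply: eq_fsbigr => r rh.
under eq_integral do rewrite muleCA.
rewrite ge0_integralZl //; last by rewrite lee_fin h0.
- apply/measurable_EFinP; apply: measurable_funM => //.
  by apply: measurableT_comp => //.
- by move=> w _; rewrite -EFinM lee_fin mulr_ge0 // indicE.
Qed.

Lemma indic_compE (X : T -> R) (A : set R) w :
  \1_A (X w) = \1_(X @^-1` A) w :> R.
Proof. by rewrite !indicE. Qed.

Lemma indep_key (G : T -> R) (X : {mfun T >-> R}) (c : R) (f : R -> \bar R) :
  measurable_fun setT G -> (forall w, (0 <= G w)%R) -> (0 <= c)%R ->
  (forall A, measurable A ->
     \int[P]_w ((G w)%:E * (\1_A (X w))%:E) = c%:E * P (X @^-1` A)) ->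
  measurable_fun setT f -> (forall x, 0 <= f x) ->
  \int[P]_w ((G w)%:E * f (X w)) = c%:E * \int[P]_w f (X w).
Proof.
move=> mG G0 c0 HA mf f0.
have nns (h : {nnsfun R >-> R}) :
    \int[P]_w ((G w)%:E * (h (X w))%:E) = c%:E * \int[P]_w (h (X w))%:E.
  have E1 := @expand_nnsfun (fun _ : T => (1%R : R)) X h (measurable_cst _) (fun=> ler01).
  rewrite (_ : \int[P]_w (h (X w))%:E = \int[P]_w (1%:E * (h (X w))%:E)); last first.
    by apply: eq_integral => w _; rewrite mul1e.
  rewrite E1 expand_nnsfun //.
  have pA r : \int[P]_w (1%:E * (\1_(h @^-1` [set r]) (X w))%:E) =
              P (X @^-1` (h @^-1` [set r])).
    under eq_integral do rewrite mul1e indic_compE.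
    by rewrite integral_indic ?setIT //; exact: measurable_funPTI.
  have Fge0 r : 0 <= r%:E * P (X @^-1` (h @^-1` [set r])).
    have [r0|r0] := leP 0%R r; first by rewrite mule_ge0 // lee_fin.
    rewrite (_ : h @^-1` [set r] = set0) ?preimage_set0 ?measure0 ?mule0 //.
    apply/seteqP; split => x //= hx.
    by have : (0 <= h x)%R by []; rewrite hx => /(lt_le_trans r0); rewrite ltxx.
  rewrite ge0_mule_fsumr; last by move=> r; rewrite pA.
  apply: eq_fsbigr => r _.
  have mhr : measurable (h @^-1` [set r]).
    exact: measurable_funPTI.
  by rewrite pA (HA _ mhr) muleCA.
pose f_ := nnsfun_approx measurableT mf.
have cvgX w : (fun n => (f_ n (X w))%:E) @ \oo --> f (X w).
  by apply: cvg_nnsfun_approx => //; move=> x _; exact: f0.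
transitivity (limn (fun n => \int[P]_w ((G w)%:E * (f_ n (X w))%:E))).
  rewrite -monotone_convergence//=.
  - apply: eq_integral => w _; apply/esym/cvg_lim => //=.
    exact: cvgeZl.
  - move=> n; apply/measurable_EFinP; apply: measurable_funM => //.
    by apply: measurableT_comp => //.
  - by move=> n w _; rewrite -EFinM lee_fin mulr_ge0.
  - move=> w _ m n mn; rewrite lee_fin ler_wpM2l //.
    exact/lefP/nd_nnsfun_approx.
rewrite (_ : \int[P]_w f (X w) = limn (fun n => \int[P]_w (f_ n (X w))%:E)); last first.
  rewrite -monotone_convergence//=.
  - apply: eq_integral => w _; apply/esym/cvg_lim => //=.
  - move=> n; apply/measurable_EFinP.
    by apply: measurableT_comp => //.
  - by move=> n w _; rewrite lee_fin.
  - move=> w _ m n mn; rewrite lee_fin.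
    exact/lefP/nd_nnsfun_approx.
rewrite -limeMl//.
  by apply: congr_lim; apply/funext => n /=; exact: nns.
apply/ereal_nondecreasing_is_cvgn => m n mn; apply: ge0_le_integral => //=.
- by move=> ? _; rewrite lee_fin.
- apply/measurable_EFinP.
  by apply: measurableT_comp => //.
- apply/measurable_EFinP.
  by apply: measurableT_comp => //.
- by move=> ? _; rewrite lee_fin; exact/lefP/nd_nnsfun_approx.
Qed.

Definition Fn {k : nat} (n : nat) (z : 'I_k -> T -> R) (g : R -> R) (B : 'I_k -> set R)
  (i : 'I_k) (w : T) : R := if (i < n)%N then g (z i w) else \1_(B i) (z i w).

Lemma int01 (f : T -> R) : measurable_fun setT f ->
  (forall w, 0 <= f w <= 1)%R ->
  \int[P]_w (f w)%:E \is a fin_num /\ 0 <= \int[P]_w (f w)%:E.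
Proof.
move=> mf f01.
have ge0 : 0 <= \int[P]_w (f w)%:E.
  by apply: integral_ge0 => w _; rewrite lee_fin; case/andP: (f01 w).
split=> //; rewrite ge0_fin_numE //.
apply: (@le_lt_trans _ _ (\int[P]_w (cst 1%R w)%:E)).
  apply: ge0_le_integral => //.
  - by move=> w _; rewrite lee_fin; case/andP: (f01 w).
  - exact/measurable_EFinP.
  - exact/measurable_EFinP/measurable_cst.
  - by move=> w _; rewrite lee_fin; case/andP: (f01 w).
by rewrite (_ : (fun w => (cst 1%R w)%:E) = cst 1) ?integral_cst //= ?mul1e ?probability_setT ?ltry.
Qed.

Lemma prod_indic (k : nat) (z : 'I_k -> {RV P >-> R}) (B : 'I_k -> set R) w :
  (\prod_(i < k) \1_(B i) (z i w) = \1_(\bigcap_(i in [set: 'I_k]) (z i @^-1` B i)) w :> R)%R.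
Proof.
case: (pselect (forall i, B i (z i w))) => H.
  rewrite indicE mem_set; last by move=> i _; exact: H.
  by rewrite big1 // => i _; rewrite indicE mem_set.
have [i Hi] : exists i, ~ B i (z i w).
  by apply: contra_notP H => H' i; apply: contra_notP H' => ?; exists i.
rewrite (bigD1 i) //= indicE memNset // mul0r indicE memNset //.
by move=> /(_ i I).
Qed.


Lemma Fn01 {k} n (z : 'I_k -> {RV P >-> R}) g B i w :
  (forall x, 0 <= g x <= 1)%R -> (0 <= Fn n z g B i w <= 1)%R.
Proof.
move=> g01; rewrite /Fn; case: ifP => _; first exact: g01.
by rewrite indicE; case: (_ \in _); rewrite ?ler01 ?lexx.
Qed.

Lemma measurable_Fn {k} n (z : 'I_k -> {RV P >-> R}) g B i :
  measurable_fun setT g -> measurable (B i) ->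
  measurable_fun setT (Fn n z g B i).
Proof.
move=> mg mB.
have -> : Fn n z g B i = if (i < n)%N then (g \o z i) else (\1_(B i) \o z i).
  by apply/funext => w; rewrite /Fn; case: ifP.
case: ifP => _.
  exact: measurableT_comp.
by apply: measurableT_comp => //; exact: measurable_indic.
Qed.

Lemma indep_step k (z : 'I_k -> {RV P >-> R}) (g : R -> R) :
  mutually_independent z -> measurable_fun setT g -> (forall x, 0 <= g x <= 1)%R ->
  forall n, (n <= k)%N -> forall B : 'I_k -> set R, (forall i, measurable (B i)) ->
  \int[P]_w (\prod_(i < k) Fn n z g B i w)%:E =
  \prod_(i < k) \int[P]_w (Fn n z g B i w)%:E.
Proof.
move=> zi mg g01; elim=> [_|n IH nk] B mB.
  under eq_integral do rewrite /Fn /= prod_indic.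
  have mI : measurable (\bigcap_(i in [set: 'I_k]) (z i @^-1` B i)).
    apply: fin_bigcap_measurable => // i _; exact: measurable_funPTI.
  rewrite integral_indic // setIT; transitivity (\prod_(i < k) P (z i @^-1` B i)); first exact: zi.
  apply: eq_bigr => i _.
  under eq_integral do rewrite /Fn /= indic_compE.
  rewrite integral_indic ?setIT //.
  exact: measurable_funPTI.
pose j : 'I_k := Ordinal nk.
have Fj w : Fn n.+1 z g B j w = g (z j w) by rewrite /Fn /= ltnSn.
have Fi i w : i != j -> Fn n.+1 z g B i w = Fn n z g B i w.
  move=> ij; rewrite /Fn; congr (if _ then _ else _).
  rewrite ltnS leq_eqVlt; case: eqP => //= iE.
  by case/eqP: ij; apply: val_inj.
pose G w := (\prod_(i < k | i != j) Fn n z g B i w)%R.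
pose c := (\prod_(i < k | i != j) fine (\int[P]_w (Fn n z g B i w)%:E))%R.
have intF i B' : (forall i, measurable (B' i)) ->
    \int[P]_w (Fn n z g B' i w)%:E \is a fin_num /\ 0 <= \int[P]_w (Fn n z g B' i w)%:E.
  move=> mB'; apply: int01; first exact: measurable_Fn.
  by move=> w; exact: Fn01.
have cE : c%:E = \prod_(i < k | i != j) \int[P]_w (Fn n z g B i w)%:E.
  rewrite /c -prodEFin; apply: eq_bigr => i _.
  by rewrite fineK //; case: (intF i B mB).
have mG : measurable_fun setT G.
  rewrite /G; under eq_fun do rewrite big_mkcond /=.
  apply: measurable_prod => i _; case: (i != j); [exact: measurable_Fn | exact: measurable_cst].
have G0 w : (0 <= G w)%R.
  by apply: prodr_ge0 => i _; case/andP: (Fn01 n z g B i w g01).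
have c0 : (0 <= c)%R.
  by apply: prodr_ge0 => i _; apply: fine_ge0; case: (intF i B mB).
have key := @indep_key G (z j) c (fun x => (g x)%:E) mG G0 c0.
transitivity (\int[P]_w ((G w)%:E * (g (z j w))%:E)).
  apply: eq_integral => w _; rewrite (bigD1 j) //= Fj -EFinM mulrC; congr (_ * _)%:E.
  by apply: eq_bigr => i ij; rewrite Fi.
have HA : forall A, measurable A ->
    \int[P]_w ((G w)%:E * (\1_A (z j w))%:E) = c%:E * P (z j @^-1` A).
  move=> A mA.
  pose B' i := if i == j then A else B i.
  have mB' i : measurable (B' i) by rewrite /B'; case: ifP.
  have FB'j w : Fn n z g B' j w = \1_A (z j w) by rewrite /Fn /= ltnn /B' eqxx.
  have FB'i i w : i != j -> Fn n z g B' i w = Fn n z g B i w.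
    by move=> ij; rewrite /Fn /B' (negbTE ij).
  transitivity (\int[P]_w (\prod_(i < k) Fn n z g B' i w)%:E).
    apply: eq_integral => w _; rewrite (bigD1 j) //= FB'j mulrC.
    by congr (_ * _)%:E; apply: eq_bigr => i ij; rewrite FB'i.
  rewrite IH ?(ltnW nk) // (bigD1 j) //= cE muleC; congr (_ * _).
    by apply: eq_bigr => i ij; apply: eq_integral => w _; rewrite FB'i.
  under eq_integral do rewrite FB'j indic_compE.
  rewrite integral_indic ?setIT //; exact: measurable_funPTI.
rewrite (key HA); last 2 first.
  - exact/measurable_EFinP.
  - by move=> x; rewrite lee_fin; case/andP: (g01 x).
rewrite cE [RHS](bigD1 j) //=.
have -> : \int[P]_w (Fn n.+1 z g B j w)%:E = \int[P]_w (g (z j w))%:E.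
  by apply: eq_integral => w _; rewrite Fj.
rewrite muleC; congr (_ * _); apply: eq_bigr => i ij.
by apply: eq_integral => w _; rewrite Fi.
Qed.

Lemma indep_prod k (z : 'I_k -> {RV P >-> R}) (g : R -> R) :
  mutually_independent z -> measurable_fun setT g -> (forall x, 0 <= g x <= 1)%R ->
  \int[P]_w (\prod_(i < k) g (z i w))%:E = \prod_(i < k) \int[P]_w (g (z i w))%:E.
Proof.
move=> zi mg g01.
have := @indep_step k z g zi mg g01 k (leqnn k) (fun=> setT) (fun=> measurableT).
have E i w : Fn k z g (fun=> setT) i w = g (z i w) by rewrite /Fn ltn_ord.
under eq_integral do under eq_bigr do rewrite E.
by under eq_bigr do under eq_integral do rewrite E.
Qed.

End key.
Section gauss.
Context (R : realType).
Local Open Scope ereal_scope.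

Lemma gauss_int (γ m : R) : (0 < γ)%R ->
  \int[lebesgue_measure]_x (expR (- γ * (x - m) ^+ 2))%:E = (Num.sqrt (pi / γ))%:E.
Proof.
move=> g0.
pose s := Num.sqrt ((γ *+ 2)^-1).
have s2 : (s ^+ 2 = (γ *+ 2)^-1)%R.
  by rewrite sqr_sqrtr // invr_ge0 mulrn_wge0 // ltW.
have s0 : s != 0%R.
  by rewrite sqrtr_eq0 -ltNge invr_gt0 mulrn_wgt0.
have pk : normal_peak s = (Num.sqrt (pi / γ))^-1%R.
  rewrite /normal_peak s2; congr (Num.sqrt _)^-1%R.
  field; exact: lt0r_neq0.
have pk0 : (0 < normal_peak s)%R by exact: normal_peak_gt0.
transitivity (\int[lebesgue_measure]_x ((normal_peak s)^-1%:E * (normal_pdf m s x)%:E)).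
  apply: eq_integral => x _; rewrite normal_pdfE //= -EFinM mulKf ?gt_eqF //.
  rewrite /normal_fun s2; congr (expR _)%:E.
  field; exact: lt0r_neq0.
rewrite ge0_integralZl //.
- by rewrite integral_normal_pdf mule1 pk invrK.
- by apply/measurable_EFinP; exact: measurable_normal_pdf.
- by move=> x _; rewrite lee_fin normal_pdf_ge0.
- by rewrite lee_fin invr_ge0 ltW.
Qed.
End gauss.

Section main.
Context (R : realType) (d : measure_display) (T : measurableType d)
    (P : probability T R) (alpha beta : R) (k : nat)
    (z : 'I_k -> {RV P >-> R}).
Hypothesis a0 : (0 < alpha)%R.
Hypothesis a1 : (alpha < 2^-1)%R.
Hypothesis b0 : (0 < beta)%R.
Hypothesis unif : forall i, uniformly_distributed (alpha - 2^-1) (2^-1 - alpha) (z i).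
Local Open Scope ereal_scope.

Let a := (alpha - 2^-1)%R.
Let b := (2^-1 - alpha)%R.
Let ab : (a < b)%R.
Proof. rewrite /a /b; have := a1; lra. Qed.

Definition gc (c x : R) := expR (- beta * (x - c) ^+ 2).

Lemma measurable_gc c : measurable_fun setT (gc c).
Proof.
apply: measurableT_comp => //; apply: measurable_funM => //.
by apply: measurable_funX; apply: measurable_funB.
Qed.

Lemma gc01 c x : (0 <= gc c x <= 1)%R.
Proof.
rewrite /gc expR_ge0 /= -expR0 ler_expR mulNr oppr_le0.
by rewrite mulr_ge0 ?sqr_ge0 // ltW.
Qed.

Lemma E_gc i c : \int[P]_w (gc c (z i w))%:E =
  ((b - a)^-1)%:E * \int[lebesgue_measure]_(x in `[a, b]) (gc c x)%:E.
Proof.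
have mz : measurable_fun setT (z i : T -> measurableTypeR R).
  move=> mD A mA; exact: (measurable_funP (z i)) mD A mA.
have mg : measurable_fun setT (fun x : measurableTypeR R => (gc c x)%:E).
  by apply/measurable_EFinP; exact: measurable_gc.
transitivity (\int[pushforward P (z i : T -> measurableTypeR R)]_x (gc c x)%:E).
  rewrite ge0_integral_pushforward //= ?preimage_setT //.
  by move=> y _; rewrite lee_fin; case/andP: (gc01 c y).
rewrite [LHS](eq_measure_integral (uniform_prob ab)); last first.
  by move=> A mA _; exact: (unif i A mA).
rewrite integral_uniform //.
by move=> y; rewrite lee_fin; case/andP: (gc01 c y).
Qed.

Lemma tonelliP (F : T -> measurableTypeR R -> \bar R) :
  measurable_fun setT (fun p : T * measurableTypeR R => F p.1 p.2) ->
  (forall w c, 0 <= F w c) ->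
  \int[P]_w \int[lebesgue_measure]_c F w c = \int[lebesgue_measure]_c \int[P]_w F w c.
Proof.
move=> mF F0.
exact: (@fubini_tonelli _ _ _ _ _ P lebesgue_measure (fun p => F p.1 p.2) mF (fun p => F0 p.1 p.2)).
Qed.

Lemma measurable_gcz (i : 'I_k) :
  measurable_fun setT (fun p : T * measurableTypeR R => gc p.2 (z i p.1)).
Proof.
have m1 : measurable_fun setT (fun p : T * measurableTypeR R => z i p.1 : R).
  apply: measurableT_comp => //; exact: measurable_funP.
have m2 : measurable_fun setT (fun p : T * measurableTypeR R => p.2 : R).
  move=> mD A mA; exact: (@measurable_snd _ _ T (measurableTypeR R)) mD A mA.
apply: measurableT_comp => //; apply: measurable_funM => //.
by apply: measurable_funX; apply: measurable_funB.
Qed.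

Definition H (c : R) := ((b - a)^-1)%:E * \int[lebesgue_measure]_(x in `[a, b]) (gc c x)%:E.

Lemma H_ge0 c : 0 <= H c.
Proof.
apply: mule_ge0; first by rewrite lee_fin invr_ge0 subr_ge0 ltW // ab.
by apply: integral_ge0 => x _; rewrite lee_fin; case/andP: (gc01 c x).
Qed.

Lemma gc_int c : \int[lebesgue_measure]_x (gc c x)%:E = (Num.sqrt (pi / beta))%:E.
Proof.
rewrite -(@gauss_int R beta c b0); apply: eq_integral => x _.
by rewrite /gc.
Qed.

Lemma H_ub c : H c <= ((b - a)^-1 * Num.sqrt (pi / beta))%:E.
Proof.
rewrite /H EFinM; apply: lee_wpmul2l; first by rewrite lee_fin invr_ge0 subr_ge0 ltW // ab.
rewrite -(gc_int c); apply: ge0_subset_integral => //.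
- by apply/measurable_EFinP; exact: measurable_gc.
- by move=> x _; rewrite lee_fin; case/andP: (gc01 c x).
Qed.

Lemma int_H (i0 : 'I_k) : \int[lebesgue_measure]_c H c = (Num.sqrt (pi / beta))%:E.
Proof.
transitivity (\int[lebesgue_measure]_c \int[P]_w (gc c (z i0 w))%:E).
  by apply: eq_integral => c _; rewrite E_gc.
rewrite -tonelliP; last 2 first.
  - by apply/measurable_EFinP; exact: measurable_gcz.
  - by move=> w c; rewrite lee_fin; case/andP: (gc01 c (z i0 w)).
transitivity (\int[P]_w (Num.sqrt (pi / beta))%:E).
  apply: eq_integral => w _; rewrite -(@gauss_int R beta (z i0 w) b0).
  by apply: eq_integral => c _; rewrite /gc -sqrrN opprB.
by rewrite integral_cst //= probability_setT mule1.
Qed.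

Lemma prod_const_le (x : \bar R) (M : R) n : 0 <= x -> x <= M%:E ->
  \prod_(i < n.+1) x <= (M ^+ n)%:E * x.
Proof.
move=> x0 xM; elim: n => [|n IH].
  by rewrite big_ord1 expr0 mul1e.
rewrite big_ord_recr /= exprSr EFinM muleAC.
by apply: lee_pmul => //; exact: prode_ge0.
Qed.

Lemma sum_sq_decomp (x : 'I_k -> R) (c : R) : (0 < k)%N ->
  (\sum_(i < k) (x i - c) ^+ 2 =
   \sum_(i < k) (x i - k%:R^-1 * \sum_(j < k) x j) ^+ 2
   + k%:R * (c - k%:R^-1 * \sum_(j < k) x j) ^+ 2)%R.
Proof.
move=> k0; set m := (k%:R^-1 * \sum_(j < k) x j)%R.
have e : (\sum_(i < k) (x i - m) = 0)%R.
  rewrite sumrB sumr_const card_ord /m; field.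
  by rewrite pnatr_eq0 -lt0n.
transitivity (\sum_(i < k) ((x i - m) ^+ 2 + ((c - m) ^+ 2 - 2 * (c - m) * (x i - m))))%R.
  by apply: eq_bigr => i _; ring.
rewrite big_split /= sumrB sumr_const card_ord.
rewrite (_ : (\sum_(i < k) 2 * (c - m) * (x i - m) = 2 * (c - m) * \sum_(i < k) (x i - m))%R); last by rewrite mulr_sumr.
rewrite e.
by rewrite mulr0 subr0 mulr_natl.
Qed.

Definition S (w : T) := (\sum_(i < k) (z i w - zmean z w) ^+ 2)%R.

Lemma stepA w : (0 < k)%N ->
  \int[lebesgue_measure]_c (\prod_(i < k) gc c (z i w))%:E =
  (expR (- beta * S w) * Num.sqrt (pi / (beta * k%:R)))%:E.
Proof.
move=> k0.
have bk : (0 < beta * k%:R)%R by rewrite mulr_gt0 // ltr0n.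
rewrite EFinM -(@gauss_int R (beta * k%:R) (zmean z w) bk) -ge0_integralZl //.
all: try (by move=> x _; rewrite lee_fin expR_ge0).
all: try (by rewrite lee_fin expR_ge0).
all: try (by apply/measurable_EFinP; apply: measurableT_comp => //; apply: measurable_funM => //;
      apply: measurable_funX; apply: measurable_funB).
apply: eq_integral => c _; rewrite -EFinM; congr EFin.
rewrite /gc -expR_sum -expRD; congr expR.
rewrite -mulr_sumr (sum_sq_decomp (fun i => z i w) c k0) /S /zmean.
ring.
Qed.

Lemma measurable_S : measurable_fun setT S.
Proof.
apply: measurable_sum => i; apply: measurable_funX; apply: measurable_funB.
  exact: measurable_funP.
apply: measurable_funM => //; apply: measurable_sum => j; exact: measurable_funP.
Qed.

Lemma main_bound (zi : mutually_independent z) (k0 : (0 < k)%N) :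
  (Num.sqrt (pi / (beta * k%:R)))%:E * \int[P]_w (expR (- beta * S w))%:E
  <= ((((b - a)^-1 * Num.sqrt (pi / beta)) ^+ k.-1) * Num.sqrt (pi / beta))%:E.
Proof.
set γ := Num.sqrt (pi / (beta * k%:R)).
set M := ((b - a)^-1 * Num.sqrt (pi / beta))%R.
pose i0 : 'I_k := Ordinal k0.
have M0 : (0 <= M)%R by rewrite /M mulr_ge0 // invr_ge0 subr_ge0 ltW // ab.
rewrite -ge0_integralZl //.
all: try (by move=> w _; rewrite lee_fin expR_ge0).
all: try (by rewrite lee_fin sqrtr_ge0).
all: try (by apply/measurable_EFinP; apply: measurableT_comp => //; apply: measurable_funM => //;
      exact: measurable_S).
pose f := fun p : T * measurableTypeR R => (\prod_(i < k) gc p.2 (z i p.1))%:E.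
have mf : measurable_fun setT f.
  apply/measurable_EFinP; apply: measurable_prod => i _; exact: measurable_gcz.
have f0 p : 0 <= f p.
  by rewrite lee_fin; apply: prodr_ge0 => i _; case/andP: (gc01 p.2 (z i p.1)).
pose f1 := fun p : T * measurableTypeR R => (gc p.2 (z i0 p.1))%:E.
have mf1 : measurable_fun setT f1.
  apply/measurable_EFinP; exact: measurable_gcz.
have f10 p : 0 <= f1 p.
  by rewrite lee_fin; case/andP: (gc01 p.2 (z i0 p.1)).
rewrite (eq_integral (fun w => \int[lebesgue_measure]_c f (w, c))); last first.
  by move=> w _; rewrite /f /= stepA // -EFinM mulrC.
rewrite tonelliP; last 2 first.
  - exact: mf.
  - by move=> w c; exact: f0.
apply: (@le_trans _ _ (\int[lebesgue_measure]_c ((M ^+ k.-1)%:E * \int[P]_w f1 (w, c)))).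
  apply: ge0_le_integral => //.
  - by move=> c _; apply: integral_ge0 => w _; exact: f0.
  - exact: (measurable_fun_fubini_tonelli_G _ mf f0).
  - apply: measurable_funeM; exact: (measurable_fun_fubini_tonelli_G _ mf1 f10).
  - move=> c _; rewrite /f /f1 /= indep_prod //; last 2 first.
      exact: measurable_gc.
      exact: gc01.
    rewrite E_gc; under eq_bigr do rewrite E_gc.
    rewrite -[in leLHS](prednK k0); apply: prod_const_le; first exact: H_ge0.
    exact: H_ub.
rewrite ge0_integralZl //.
all: try (exact: (measurable_fun_fubini_tonelli_G _ mf1 f10)).
all: try (by move=> c _; apply: integral_ge0 => w _; exact: f10).
all: try (by rewrite lee_fin exprn_ge0).
rewrite EFinM; apply: lee_wpmul2l; first by rewrite lee_fin exprn_ge0.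
rewrite -tonelliP; last 2 first.
  - exact: mf1.
  - by move=> w c; exact: f10.
rewrite (eq_integral (fun _ => (Num.sqrt (pi / beta))%:E)); last first.
  move=> w _; rewrite /f1 /= -(@gauss_int R beta (z i0 w) b0).
  by apply: eq_integral => c _; rewrite /gc -sqrrN opprB.
by rewrite integral_cst //= probability_setT mule1.
Qed.

End main.

Theorem lemma5 (R : realType) (d : measure_display) (T : measurableType d)
    (P : probability T R) (alpha beta : R) (k : nat)
    (z : 'I_k -> {RV P >-> R}) :
  0 < alpha -> alpha < 2^-1 -> (1 <= k)%N -> 0 < beta ->
  mutually_independent z ->
  (forall i, uniformly_distributed (alpha - 2^-1) (2^-1 - alpha) (z i)) ->
  ('E_P[fun w => expR (- beta * \sum_(i < k) (z i w - zmean z w) ^+ 2)]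
    <= ((k%:R `^ 2^-1) *
        ((pi / ((1 - 2 * alpha) ^+ 2 * beta)) `^ ((k%:R - 1) / 2)))%:E)%E.
Proof.
move=> a0 a1 k1 b0 zi unif.
have MB := @main_bound R d T P alpha beta k z a1 b0 unif zi k1.
rewrite /S in MB.
set L := (2^-1 - alpha - (alpha - 2^-1)) in MB.
have LE : L = 1 - 2 * alpha by rewrite /L; lra.
have L0 : 0 < L by rewrite LE; lra.
set s := Num.sqrt (pi / beta) in MB.
have s0 : 0 < s by rewrite sqrtr_gt0 divr_gt0 // pi_gt0.
set M := (L^-1 * s) in MB.
have M0 : 0 <= M by rewrite mulr_ge0 // ?invr_ge0 ltW.
set f := (fun w => expR (- beta * \sum_(i < k) (z i w - zmean z w) ^+ 2)) in MB *.
have mf : measurable_fun setT f.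
  apply: measurableT_comp => //; apply: measurable_funM => //; exact: measurable_S.
have f01 w : 0 <= f w <= 1.
  rewrite /f expR_ge0 /= -expR0 ler_expR mulNr oppr_le0 mulr_ge0 ?(ltW b0) //.
  by apply: sumr_ge0 => i _; exact: sqr_ge0.
have [Efin E0] := @int01 d T R P f mf f01.
rewrite unlock -(fineK Efin) lee_fin.
rewrite -(fineK Efin) -EFinM lee_fin in MB.
set e := fine _ in MB *.
have k0 : (0 < k%:R :> R) by rewrite ltr0n.
have ge : (k%:R - 1) / 2 = 2^-1 * (k.-1)%:R :> R.
  by rewrite -{1}(prednK k1) -natr1; ring.
have pb0 : 0 <= pi / ((1 - 2 * alpha) ^+ 2 * beta).
  by rewrite divr_ge0 ?pi_ge0 // mulr_ge0 ?sqr_ge0 ?ltW.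
rewrite ge powRrM (powR12_sqrt pb0) powR_mulrn ?sqrtr_ge0 // powR12_sqrt ?ler0n //.
have -> : Num.sqrt (pi / ((1 - 2 * alpha) ^+ 2 * beta)) = M.
  rewrite -LE /M /s (_ : pi / (L ^+ 2 * beta) = L^-1 ^+ 2 * (pi / beta)); last first.
    by field; rewrite ?gt_eqF //; apply/andP; split; rewrite gt_eqF.
  by rewrite sqrtrM ?sqr_ge0 // sqrtr_sqr ger0_norm // invr_ge0 ltW.
have sk : 0 < Num.sqrt (k%:R : R) by rewrite sqrtr_gt0.
have gE : Num.sqrt (pi / (beta * k%:R)) = s / Num.sqrt (k%:R : R).
  rewrite /s -sqrtrV ?ler0n // -sqrtrM ?divr_ge0 ?pi_ge0 ?ltW //.
  by congr Num.sqrt; field; apply/andP; split; rewrite gt_eqF.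
rewrite gE in MB.
rewrite -(ler_pM2l (divr_gt0 s0 sk)); apply: (le_trans MB).
rewrite le_eqVlt; apply/orP; left; apply/eqP; field.
by rewrite gt_eqF.
Qed.
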